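(* Let $S:\overline{\mathcal{D}}\to\widehat{\mathbb{C}}$ be a weak B-involution with $\mathcal{D}=\bigsqcup_{i=1}^k\Omega_i$, let $\Sigma$ be its welded surface and $\mathcal{G}$ its welding graph. Then the connected components of $\Sigma$ are in bijective correspondence with the connected components of $\mathcal{G}$.
   Context: $\Omega_1,\dots,\Omega_k$ are pairwise disjoint finitely connected proper subdomains of $\widehat{\mathbb{C}}$ with $\mathrm{int}(\overline{\Omega_i})=\Omega_i$; $X\subset\partial\mathcal{D}$ finite with $\partial^0\mathcal{D}=\partial\mathcal{D}\setminus X$ a finite union of disjoint non-singular real-analytic curves; $S$ continuous on $\overline{\mathcal{D}}$, meromorphic on $\mathcal{D}$, mapping $\partial\mathcal{D}$ to itself and $X$ to itself with $S\circ S=\mathrm{id}$ on $\partial\mathcal{D}$, orientation-reversing on $\partial^0\mathcal{D}$. Set $\partial^0\Omega_i=\partial^0\mathcal{D}\cap\overline{\Omega_i}$. The welded surface $\Sigma$ is the compactification (by filling in punctures) of the Riemann surface obtained from two copies of $\mathcal{D}\cup\partial^0\mathcal{D}$ by identifying each $x\in\partial^0\mathcal{D}$ in the first copy with $S(x)$ in the second copy (this is a finite union of compact Riemann surfaces). The copies of $\Omega_i$ in the two copies are denoted $\Omega_i^\pm$. The welding graph $\mathcal{G}$ has vertices $v_1^\pm,\dots,v_k^\pm$, and edges exactly between $v_{i_1}^-$ and $v_{i_2}^+$ whenever $S(\partial^0\Omega_{i_1})\cap\partial^0\Omega_{i_2}\ne\emptyset$. *)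

(* Defs.v *)
Set Warnings "-notation-overridden,-ambiguous-paths,-notation-incompatible-prefix".
From HB Require Import structures.
From Stdlib Require Import Relations.
From mathcomp Require Import all_boot all_order all_algebra.
From mathcomp Require Import all_classical all_reals all_analysis.
From mathcomp Require Import generic_quotient.

Set Implicit Arguments.
Unset Strict Implicit.
Unset Printing Implicit Defensive.

Import Order.TTheory GRing.Theory Num.Theory numFieldNormedType.Exports.
Local Open Scope classical_set_scope.
Local Open Scope ring_scope.
Local Open Scope quotient_scope.

Section Glue.
Context {T : topologicalType} (r : T -> T -> Prop).

Definition glue_rel : rel T := fun x y => `[< clos_refl_sym_trans T r x y >].

Lemma glue_refl : reflexive glue_rel.
Proof. by move=> x; apply/asboolP; apply: rst_refl. Qed.
Lemma glue_sym : symmetric glue_rel.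
Proof.
move=> x y; apply/asboolP/asboolP; exact: rst_sym.
Qed.
Lemma glue_trans : transitive glue_rel.
Proof. by move=> y x z /asboolP Hxy /asboolP Hyz; apply/asboolP; apply: rst_trans Hxy Hyz. Qed.

Canonical glue_equiv := EquivRel glue_rel glue_refl glue_sym glue_trans.

Definition glue_space := quotient_topology {eq_quot glue_equiv}.
Definition glue_pi (x : T) : glue_space := \pi_(glue_space) x.
End Glue.


Notation Chat R := (one_point_compactification (R * R)%type).

Section Sphere.
Variable R : realType.
Local Notation Chat := (Chat R).

Definition cplx := (R * R)%type.

Definition c0 : cplx := (0, 0).
Definition cadd (z w : cplx) : cplx := (z.1 + w.1, z.2 + w.2).
Definition csub (z w : cplx) : cplx := (z.1 - w.1, z.2 - w.2).
Definition cmul (z w : cplx) : cplx := (z.1 * w.1 - z.2 * w.2, z.1 * w.2 + z.2 * w.1).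
Definition cnorm (z : cplx) : R := Num.sqrt (z.1 ^+ 2 + z.2 ^+ 2).
Definition cinv (z : cplx) : cplx :=
  (z.1 / (z.1 ^+ 2 + z.2 ^+ 2), - z.2 / (z.1 ^+ 2 + z.2 ^+ 2)).
Definition ci : cplx := (0, 1).
Definition creal (x : R) : cplx := (x, 0).

(* standard charts of the sphere: z on C, 1/z near infinity (None) *)
Definition in_chart (q z : Chat) : Prop :=
  match q with Some _ => z <> None | None => z <> Some c0 end.
Definition coord (q z : Chat) : cplx :=
  match q with
  | Some _ => match z with Some c => c | None => c0 end
  | None => match z with Some c => cinv c | None => c0 end
  end.
Definition param (q : Chat) (w : cplx) : Chat :=
  match q with
  | Some _ => Some w
  | None => if w == c0 then None else Some (cinv w)
  end.

Definition cdiff_at (g : cplx -> cplx) (w0 : cplx) : Prop :=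
  exists a : cplx, forall eps : R, 0 < eps -> exists2 del : R, 0 < del &
    forall h : cplx, cnorm h < del ->
      cnorm (csub (csub (g (cadd w0 h)) (g w0)) (cmul a h)) <= eps * cnorm h.

Definition holomorphic_on (U : set Chat) (f : Chat -> Chat) : Prop :=
  forall p, U p -> {for p, continuous f} /\
    cdiff_at (fun w => coord (f p) (f (param p w))) (coord p p).

(* meromorphic = holomorphic into the sphere, not identically infinity
   on any connected component of U *)
Definition meromorphic_on (U : set Chat) (f : Chat -> Chat) : Prop :=
  holomorphic_on U f /\
  forall p, U p -> exists2 q, connected_component U p q & f q <> None.

Definition series_rep (gamma : R -> Chat) (t0 : R) (a : nat -> cplx) (r : R) :=
  0 < r /\ forall t, `|t - t0| < r ->
    [/\ in_chart (gamma t0) (gamma t),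
        (fun N => \sum_(n < N) (a n).1 * (t - t0) ^+ n) @ \oo
           --> (coord (gamma t0) (gamma t)).1 &
        (fun N => \sum_(n < N) (a n).2 * (t - t0) ^+ n) @ \oo
           --> (coord (gamma t0) (gamma t)).2].

(* real-analytic and non-singular (non-vanishing derivative) at t0 *)
Definition ranalytic_ns_at (gamma : R -> Chat) (t0 : R) : Prop :=
  exists a r, series_rep gamma t0 a r /\ a 1%N <> c0.

(* non-singular real-analytic curve: an embedded real-analytic
   non-singular open arc (injective parametrisation by R) or closed
   curve (periodic parametrisation, injective modulo the period) *)
Definition analytic_curve (G : set Chat) : Prop :=
  exists gamma : R -> Chat,
  [/\ G = range gamma,
      forall t, ranalytic_ns_at gamma t,
      injective gamma \/
        exists2 T : R, 0 < T & forall s t, gamma s = gamma t <->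
                                 exists m : int, s = t + m%:~R * T &
      forall t eps, 0 < eps -> exists2 V, nbhs (gamma t) V &
        V `&` G `<=` gamma @` [set s | `|s - t| < eps]].

Definition local_param (B : set Chat) (gamma : R -> Chat) (t0 : R) : Prop :=
  ranalytic_ns_at gamma t0 /\ exists2 r : R, 0 < r &
  [/\ forall s1 s2, `|s1 - t0| < r -> `|s2 - t0| < r ->
        gamma s1 = gamma s2 -> s1 = s2,
      forall s, `|s - t0| < r -> B (gamma s) &
      exists2 V, nbhs (gamma t0) V &
        V `&` B `<=` gamma @` [set s | `|s - t0| < r]].

Definition left_of (A : set Chat) (gamma : R -> Chat) (t0 : R) : Prop :=
  exists a r, series_rep gamma t0 a r /\ exists2 del : R, 0 < del &
    forall eps : R, 0 < eps < del ->
      A (param (gamma t0) (cadd (a 0%N) (cmul (creal eps) (cmul ci (a 1%N))))) /\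
      ~ A (param (gamma t0) (csub (a 0%N) (cmul (creal eps) (cmul ci (a 1%N))))).

Definition orientation_reversing (A B : set Chat) (S : Chat -> Chat) : Prop :=
  forall gamma t0 gamma2 s0,
    local_param B gamma t0 -> local_param B gamma2 s0 ->
    gamma2 s0 = S (gamma t0) -> left_of A gamma t0 -> left_of A gamma2 s0 ->
    forall eta : R, 0 < eta -> exists2 del : R, 0 < del &
      forall t, t0 < t < t0 + del ->
        exists2 s, s0 - eta < s < s0 & S (gamma t) = gamma2 s.

Definition boundary (A : set Chat) : set Chat := closure A `\` interior A.

Definition finitely_connected_domain (O : set Chat) : Prop :=
  [/\ open O, O !=set0, connected O, O != setT &
      finite_set [set connected_component (~` O) x | x in ~` O]].

Section Data.
Variables (k : nat) (Om : 'I_k -> set Chat) (X : set Chat) (S : Chat -> Chat).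

Definition Dom : set Chat := \bigcup_i Om i.
Definition bd0 : set Chat := boundary Dom `\` X.
Definition bd0Om (i : 'I_k) : set Chat := bd0 `&` closure (Om i).

Definition weak_B_involution : Prop :=
  [/\ forall i, finitely_connected_domain (Om i) /\ interior (closure (Om i)) = Om i,
      forall i j, i != j -> Om i `&` Om j = set0,
      finite_set X /\ X `<=` boundary Dom,
      exists n (G : 'I_n -> set Chat),
        [/\ forall j, analytic_curve (G j),
            forall j j', j != j' -> G j `&` G j' = set0 &
            bd0 = \bigcup_j G j] &
      [/\ {within closure Dom, continuous S},
          meromorphic_on Dom S,
          S @` boundary Dom `<=` boundary Dom /\ S @` X `<=` X,
          forall x, boundary Dom x -> S (S x) = x &
          orientation_reversing Dom bd0 S]].

(* welded surface: two copies (false = first copy "-", true = second copy "+")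
   of D u bd0, x in the first copy identified with S x in the second *)
Definition weld_rel (p q : Chat * bool) : Prop :=
  exists2 x, bd0 x & p = (x, false) /\ q = (S x, true).

Definition welded_space := glue_space weld_rel.
Definition weld_pi (p : Chat * bool) : welded_space := glue_pi weld_rel p.
Definition welded_set : set welded_space :=
  weld_pi @` ((Dom `|` bd0) `*` setT).
Definition welded_components : set (set welded_space) :=
  [set connected_component welded_set q | q in welded_set].

(* welding graph on vertices (i, false) = v_i^-, (i, true) = v_i^+ *)
Definition weld_edge (i1 i2 : 'I_k) : Prop := S @` bd0Om i1 `&` bd0Om i2 !=set0.
Definition welding_adj : rel ('I_k * bool) := fun u v =>
  `[< (u.2 = false /\ v.2 = true /\ weld_edge u.1 v.1) \/
      (u.2 = true /\ v.2 = false /\ weld_edge v.1 u.1) >].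
Definition graph_component (v : 'I_k * bool) : set ('I_k * bool) :=
  [set w | connect welding_adj v w].
Definition graph_components : set (set ('I_k * bool)) := range graph_component.
End Data.
End Sphere.

Arguments Dom {R k} Om.
Arguments bd0 {R k} Om X.
Arguments bd0Om {R k} Om X i.
Arguments weak_B_involution {R k} Om X S.
Arguments weld_rel {R k} Om X S p q.
Arguments welded_space {R k} Om X S.
Arguments weld_pi {R k} Om X S p.
Arguments welded_set {R k} Om X S.
Arguments welded_components {R k} Om X S.
Arguments weld_edge {R k} Om X S i1 i2.
Arguments welding_adj {R k} Om X S u v.
Arguments graph_component {R k} Om X S v.
Arguments graph_components {R k} Om X S.

(* Main.v *)
Require Import Defs.
Set Warnings "-notation-overridden,-ambiguous-paths,-notation-incompatible-prefix".
From mathcomp Require Import all_boot all_order all_algebra.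
From mathcomp Require Import all_classical all_reals all_analysis.
From mathcomp Require Import generic_quotient.
From Stdlib Require Import Relations.
Import numFieldNormedType.Exports.
Local Open Scope classical_set_scope.
Local Open Scope ring_scope.

Section T. Variable R : realType.
Lemma RR_closed1 (c : (R*R)%type) : closed [set c].
Proof. apply: accessible_closed_set1; apply: hausdorff_accessible; exact: norm_hausdorff. Qed.

Lemma Chat_open1 (y : Chat R) : open (~` [set y]).
Proof.
rewrite openE => -[a|] /= ay.
- rewrite /interior /=. 
  case: y ay => [c|] ay.
  + have ac : a != c by apply/eqP => e; apply: ay; rewrite e.
    have : nbhs a (~` [set c]).
      apply: open_nbhs_nbhs; split; first exact/closed_openC/RR_closed1.
      by move=> /= e; move/eqP: ac; apply.
    move=> /one_point_compactification_some_nbhs; apply: filterS.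
    by move=> _ [b /= bc <-] [e]; apply: bc.
  + have : nbhs a (Some @^-1` [set~ @None (R*R)%type]) 
      by apply: (@filterS _ _ (nbhs_filter a) setT); [|exact: filterT].
    exact.
- case: y ay => [c|] ay; last by exfalso; apply: ay.
  rewrite /interior /=.
  exists [set c]; first by split; [exact: compact_set1|exact: RR_closed1].
  by move=> [b|] /= [[b' /= nb [<-]]|//] [e]; apply: nb; rewrite e.
Qed.

Lemma Chat_closed_finite (A : set (Chat R)) : finite_set A -> closed A.
Proof.
move: A; apply/accessible_finite_set_closed => x y xy.
exists (~` [set y]); split; first exact: Chat_open1.
  by rewrite inE /= => e; move/eqP: xy; apply.
by rewrite inE /= => /(_ erefl).
Qed.
End T.

Section Main.
Variable R : realType.
Variables (k : nat) (Om : 'I_k -> set (Chat R)) (X : set (Chat R)) (S : Chat R -> Chat R).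
Hypothesis HB : weak_B_involution Om X S.

Local Notation Dom := (Dom Om).
Local Notation bd0 := (bd0 Om X).
Local Notation bd := (boundary Dom).
Local Notation wpi := (weld_pi Om X S).
Local Notation WS := (welded_set Om X S).
Local Notation adj := (welding_adj Om X S).

Lemma Om_open i : open (Om i).
Proof. by case: HB => /(_ i) [[]]. Qed.
Lemma Om_conn i : connected (Om i).
Proof. by case: HB => /(_ i) [[]]. Qed.
Lemma Om_ne i : Om i !=set0.
Proof. by case: HB => /(_ i) [[]]. Qed.
Lemma Om_disj i j : i != j -> Om i `&` Om j = set0.
Proof. by case: HB => _ /(_ i j). Qed.
Lemma X_fin : finite_set X.
Proof. by case: HB => _ _ []. Qed.
Lemma X_bd : X `<=` bd.
Proof. by case: HB => _ _ []. Qed.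
Lemma S_cont : {within closure Dom, continuous S}.
Proof. by case: HB => _ _ _ _ []. Qed.
Lemma S_bd x : bd x -> bd (S x).
Proof. by case: HB => _ _ _ _ [_ _ [+ _] _ _] => H bx; apply: H; exists x. Qed.
Lemma S_X x : X x -> X (S x).
Proof. by case: HB => _ _ _ _ [_ _ [_ +] _ _] => H bx; apply: H; exists x. Qed.
Lemma S_inv x : bd x -> S (S x) = x.
Proof. by case: HB => _ _ _ _ [_ _ _ + _]; apply. Qed.

Lemma bd0_S x : bd0 x -> bd0 (S x).
Proof.
move=> [bx nX]; split; first exact: S_bd.
by move=> /S_X; rewrite S_inv.
Qed.
Lemma bd0_SS x : bd0 x -> S (S x) = x.
Proof. by move=> [bx _]; exact: S_inv. Qed.

Lemma Dom_open : open Dom.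
Proof. by apply: bigcup_open => i _; exact: Om_open. Qed.

Lemma Dom_nbd x : Dom x -> ~ bd x.
Proof.
move=> Dx [_]; apply.
by move: Dom_open; rewrite openE; apply.
Qed.

Lemma bd_closure x : bd x -> closure Dom x.
Proof. by case. Qed.

Lemma closure_Om i : closure (Om i) `<=` closure Dom.
Proof. by apply: closureS => y Oy; exists i. Qed.

Lemma closure_Dom x : closure Dom x -> exists i, closure (Om i) x.
Proof.
move=> cx.
have cl : closed (\bigcup_(i in [set: 'I_k]) closure (Om i)).
  apply: closed_bigcup; first exact: finite_finset.
  by move=> i _; exact: closed_closure.
have sub : Dom `<=` \bigcup_(i in [set: 'I_k]) closure (Om i).
  by move=> y [i _ Oy]; exists i => //; exact: subset_closure.
have := closureS sub cx.
rewrite -(closure_id _).1 //.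
by move=> [i _ ci]; exists i.
Qed.

Lemma Om_closure i j y : Om i y -> closure (Om j) y -> i = j.
Proof.
move=> Oy cy; apply: contrapT => ij.
have [z [zj zi]] := cy _ (open_nbhs_nbhs (conj (Om_open i) Oy)).
have : Om i `&` Om j = set0 by apply: Om_disj; apply/eqP.
by move/seteqP => [/(_ z) H _]; apply: H.
Qed.

Local Open Scope quotient_scope.
Lemma wpi_rst p q : wpi p = wpi q -> clos_refl_sym_trans _ (weld_rel Om X S) p q.
Proof.
rewrite /weld_pi /glue_pi => H.
have : glue_rel (weld_rel Om X S) p q by apply/eqquotP; exact: H.
by move/asboolP.
Qed.

Lemma rst_wpi p q : clos_refl_sym_trans _ (weld_rel Om X S) p q -> wpi p = wpi q.
Proof.
move=> H; rewrite /weld_pi /glue_pi; apply/eqquotP; exact/asboolP.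
Qed.

Definition E3 p q := p = q \/ weld_rel Om X S p q \/ weld_rel Om X S q p.

Lemma E3_trans p q r : E3 p q -> E3 q r -> E3 p r.
Proof.
move=> [->//|[[a ba [e1 e2]]|[a ba [e1 e2]]]] [<-|[[b bb [e3 e4]]|[b bb [e3 e4]]]]; subst => //; rewrite /E3.
- by right; left; exists a.
- case: e4 => eab; have ab : a = b by rewrite -(bd0_SS _ ba) -(bd0_SS _ bb) eab.
  by subst; left.
- by right; right; exists a.
- by case: e3 => <-; left.
Qed.




Lemma wpi_E3 p q : wpi p = wpi q -> E3 p q.
Proof.
move/wpi_rst; elim => [x y H|x|x y _ [->|[H|H]]|x y z _ H1 _ H2].
- by right; left.
- by left.
- by left.
- by right; right.
- by right; left.
- exact: E3_trans H1 H2.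
Qed.

Lemma wpi_class p y s : wpi p = wpi (y, s) ->
  p = (y, s) \/ (bd0 y /\ p = (S y, ~~ s)).
Proof.
move/wpi_E3 => [->|[[a ba [-> [-> ->]]]|[a ba [[-> ->] ->]]]].
- by left.
- by right; split; [exact: bd0_S|rewrite bd0_SS].
- by right.
Qed.

Lemma wpi_S y s : bd0 y -> wpi (S y, ~~ s) = wpi (y, s).
Proof.
move=> by0; apply: rst_wpi; case: s => /=.
- apply: rst_step; exists (S y); first exact: bd0_S.
  by rewrite bd0_SS.
- by apply: rst_sym; apply: rst_step; exists y.
Qed.


Definition good (C : set ('I_k * bool)) (p : Chat R * bool) :=
  ~ X p.1 /\ forall i, closure (Om i) p.1 -> C (i, p.2).
Definition OC C : set (welded_space Om X S) :=
  [set q | forall p, wpi p = q -> good C p].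

Lemma nbhs_clos a : nbhs a [set z | forall j, closure (Om j) z -> closure (Om j) a].
Proof.
set F := \bigcup_(j in [set j | ~ closure (Om j) a]) closure (Om j).
have cF : closed F.
  apply: closed_bigcup; first exact: finite_finset.
  by move=> j _; exact: closed_closure.
have : nbhs a (~` F).
  apply: open_nbhs_nbhs; split; first exact: closed_openC.
  by move=> [j /= nj cj].
apply: filterS => z nFz j cz; apply: contrapT => nj; apply: nFz; by exists j.
Qed.

Lemma nbhs_nX a : ~ X a -> nbhs a (~` X).
Proof.
move=> nXa; apply: open_nbhs_nbhs; split => //.
apply: closed_openC; apply: Chat_closed_finite; exact: X_fin.
Qed.

Lemma nbhs_pre C x s U : nbhs x U ->
  (forall y, U y -> forall p, wpi p = wpi (y, s) -> good C p) ->
  nbhs ((x, s) : (Chat R * bool)%type) (wpi @^-1` OC C).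
Proof.
move=> Ux H; exists (U, [set s]); first by split.
by move=> [y t] /= [Uy ->] p; apply: H.
Qed.

Lemma OC_open C : open (OC C).
Proof.
change (open (wpi @^-1` OC C)).
rewrite openE => -[x s] /= Hp.
have gx : good C (x, s) by exact: Hp.
have [cx|ncx] := pselect (closure Dom x); last first.
  apply: (@nbhs_pre _ _ _ (~` closure Dom)).
    apply: open_nbhs_nbhs; split => //; exact/closed_openC/closed_closure.
  move=> y ny p /wpi_class [->|[[by0 _] _]]; last by exfalso; apply: ny; exact: bd_closure.
  split => [/X_bd/bd_closure//|i /closure_Om//].
have [b0x|nb0x] := pselect (bd0 x); last first.
  have nbx : ~ bd x by move=> bx; apply: nb0x; split => //; case: gx.
  have Dx : Dom x.
    apply: interior_subset; apply: contrapT => ni; apply: nbx; by split.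
  case: Dx => i _ Oix.
  apply: (@nbhs_pre _ _ _ (Om i)).
    by apply: open_nbhs_nbhs; split => //; exact: Om_open.
  move=> y Oy p /wpi_class [->|[[by0 _] _]]; last first.
    by exfalso; apply: (@Dom_nbd y) => //; exists i.
  split => [/X_bd|j cj].
    by apply: Dom_nbd; exists i.
  have <- := Om_closure _ _ _ Oy cj.
  by apply: gx.2; exact: subset_closure.
have gx' : good C (S x, ~~ s) by apply: Hp; exact: wpi_S.
have hc := (@subspace_continuousP _ (closure Dom) _ S).1 S_cont x cx.
have hM := hc _ (nbhs_clos (S x)).
have nXx : ~ X x by case: gx.
apply: (@nbhs_pre _ _ _ ([set y | closure Dom y ->
   forall j, closure (Om j) (S y) -> closure (Om j) (S x)] `&`
   ([set z | forall j, closure (Om j) z -> closure (Om j) x] `&` ~` X))).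
  apply: filterI; first exact: hM.
  by apply: filterI; [exact: nbhs_clos|exact: nbhs_nX].
move=> y [Hy [Cy nXy]] p /wpi_class [->|[by0 ->]].
  split => // j cj; apply: gx.2; exact: Cy.
split; first by case: (bd0_S _ by0).
move=> j cj; apply: gx'.2; apply: Hy => //.
by case: by0 => /bd_closure.
Qed.

Definition welded y := (Dom `|` bd0) y.

Lemma welded_nX y : welded y -> ~ X y.
Proof. by case=> [Dy /X_bd|[]//]; exact: Dom_nbd. Qed.

Lemma welded_cl y : welded y -> exists i, closure (Om i) y.
Proof.
move=> wy; apply: closure_Dom.
case: wy => [Dy|[/bd_closure //]]; exact: subset_closure.
Qed.

Lemma class_nX p y s : welded y -> wpi p = wpi (y, s) -> ~ X p.1.
Proof.
move=> wy /wpi_class [->|[by0 ->]]; first exact: welded_nX.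
by case: (bd0_S _ by0).
Qed.

Lemma adj_S y i j s : bd0 y -> closure (Om i) y -> closure (Om j) (S y) ->
  adj (i, s) (j, ~~ s).
Proof.
move=> by0 ci cj; apply/asboolP; case: s => /=; [right|left]; split => //; split => //.
- exists y; split; last by split.
  exists (S y); first by split => //; exact: bd0_S.
  exact: bd0_SS.
- exists (S y); split; first by exists y.
  by split => //; exact: bd0_S.
Qed.

Lemma adj_sym : ssrbool.symmetric adj.
Proof.
move=> u v; apply/asboolP/asboolP => -[[a [b c]]|[a [b c]]].
- by right.
- by left.
- by right.
- by left.
Qed.

Lemma coh_base y s i p j : welded y -> closure (Om i) y -> wpi p = wpi (y, s) ->
  closure (Om j) p.1 -> connect adj (i, s) (j, p.2).
Proof.
move=> wy ci /wpi_class [->|[by0 ->]] /= cj; last first.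
  by apply: connect1; exact: (adj_S _ _ _ _ by0).
case: wy => [[l _ Ol]|by0].
  have <- := Om_closure _ _ _ Ol ci; have <- := Om_closure _ _ _ Ol cj.
  exact: connect0.
have [l cl] : exists l, closure (Om l) (S y).
  by apply: closure_Dom; case: (bd0_S _ by0) => /bd_closure.
apply: (@connect_trans _ _ (l, ~~ s)); apply: connect1.
  exact: (adj_S _ _ _ _ by0).
rewrite -{2}(negbK s); apply: (adj_S _ _ _ _ (bd0_S _ by0)) => //.
by rewrite bd0_SS.
Qed.

Lemma coh y s p1 p2 i j : welded y -> wpi p1 = wpi (y, s) -> wpi p2 = wpi (y, s) ->
  closure (Om i) p1.1 -> closure (Om j) p2.1 -> connect adj (i, p1.2) (j, p2.2).
Proof.
move=> wy e1 e2 c1 c2.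
have [i0 c0] := welded_cl _ wy.
apply: (@connect_trans _ _ (i0, s)); last exact: (coh_base _ _ _ _ _ wy c0 e2).
rewrite (sym_connect_sym adj_sym); exact: (coh_base _ _ _ _ _ wy c0 e1).
Qed.

Lemma WS_elim q : WS q -> exists y s, welded y /\ q = wpi (y, s).
Proof. by move=> [[y s] [wy _] <-]; exists y, s. Qed.

Lemma OC_dich v0 q : WS q ->
  (OC [set w | connect adj v0 w] q <-> ~ OC (~` [set w | connect adj v0 w]) q).
Proof.
move=> /WS_elim [y [s [wy ->]]]; split.
  move=> H1 H2; have [j cj] := welded_cl _ wy.
  have g1 := (H1 (y, s) erefl).2 j cj; have g2 := (H2 (y, s) erefl).2 j cj.
  exact: g2 g1.
move=> H p hp; split; first exact: (class_nX _ _ _ wy hp).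
move=> j cj; apply: contrapT => nC; apply: H => p' hp'.
split; first exact: (class_nX _ _ _ wy hp').
move=> l cl /= Cl; apply: nC => /=.
apply: connect_trans Cl _; exact: (coh _ _ _ _ _ _ wy hp' hp cl cj).
Qed.

Lemma conn_between (A B : set (Chat R)) : connected A -> A `<=` B -> B `<=` closure A -> connected B.
Proof.
move=> cA AB Bc; apply/connectedP => E [E0 BE sep].
have : A `<=` E false `|` E true by rewrite -BE.
move/(connected_subset sep)/(_ cA) => [AF|AT].
- have [z Tz] := E0 true.
  have : (closure (E false) `&` E true) z.
    split => //; apply: (closureS AF); apply: Bc; rewrite BE; by right.
  by case: sep => -> _.
- have [z Fz] := E0 false.
  have : (E false `&` closure (E true)) z.
    split => //; apply: (closureS AT); apply: Bc; rewrite BE; by left.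
  by case: sep => _ ->.
Qed.

Local Notation CC := (connected_component WS).
Definition Ai i := Om i `|` bd0Om Om X i.
Definition piece i s := (fun y => wpi (y, s)) @` Ai i.

Lemma pair_cont (s : bool) : continuous (fun y : Chat R => ((y, s) : (Chat R * bool)%type)).
Proof.
move=> y W [[U V] [Uy Vs] sub]; apply: filterS Uy => z Uz; apply: sub; split => //.
exact: nbhs_singleton Vs.
Qed.

Lemma wpi_cont s : continuous (fun y => wpi (y, s)).
Proof.
move=> y; apply: (@continuous_comp _ _ _ (fun y : Chat R => ((y, s) : (Chat R * bool)%type)) wpi).
  exact: pair_cont.
exact: pi_continuous.
Qed.

Lemma piece_conn i s : connected (piece i s).
Proof.
apply: connected_continuous_connected; last exact: continuous_subspaceT (wpi_cont s).
apply: (@conn_between (Om i) (Ai i) (Om_conn i)); first by move=> y Oy; left.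
by move=> y [Oy|[_ cy]] //; exact: subset_closure.
Qed.

Lemma piece_WS i s : piece i s `<=` WS.
Proof.
move=> _ [y Ay <-]; exists (y, s) => //; split => //.
by case: Ay => [Oy|[b _]]; [left; exists i|right].
Qed.

Lemma piece_comp i s y z : Ai i y -> Ai i z -> CC (wpi (y, s)) (wpi (z, s)).
Proof.
move=> Ay Az; exists (piece i s); last by exists z.
split; [by exists y|exact: piece_WS|exact: piece_conn].
Qed.

Lemma adj_comp u v z z' : adj u v -> Om u.1 z -> Om v.1 z' -> CC (wpi (z, u.2)) (wpi (z', v.2)).
Proof.
case: u v => [i s] [j t] /asboolP [[/= -> [-> [x [[y bx <-] bj]]]]|[/= -> [-> [x [[y bx <-] bi]]]]] Oz Oz'.
- apply: (@connected_component_trans _ _ (wpi (y, false))).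
    by apply: (piece_comp i); [left|right].
  rewrite -(wpi_S _ false); last by case: bx.
  by apply: (piece_comp j); [right|left].
- apply: (@connected_component_trans _ _ (wpi (S y, true))).
    by apply: (piece_comp i); [left|right].
  rewrite (wpi_S _ false); last by case: bx.
  by apply: (piece_comp j); [right|left].
Qed.

Lemma conn_comp u v : connect adj u v -> forall z z', Om u.1 z -> Om v.1 z' ->
  CC (wpi (z, u.2)) (wpi (z', v.2)).
Proof.
move/connectP => [p pth ->]; elim: p u pth => [|w p IH] u /=.
  by move=> _ z z' Oz Oz'; apply: (piece_comp u.1); left.
move=> /andP [uw pth] z z' Oz Oz'.
have [z'' Oz''] := Om_ne w.1.
apply: (@connected_component_trans _ _ (wpi (z'', w.2))).
  exact: adj_comp uw Oz Oz''.
exact: IH.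
Qed.

Lemma K_OC i0 s0 z0 : Om i0 z0 ->
  CC (wpi (z0, s0)) `<=` OC [set w | connect adj (i0, s0) w].
Proof.
move=> Oz0.
set C := [set w | connect adj (i0, s0) w].
have wz0 : welded z0 by left; exists i0.
have WSq0 : WS (wpi (z0, s0)) by exists (z0, s0).
have q0OC : OC C (wpi (z0, s0)).
  move=> p /wpi_class [->|[[bz _] _]]; last by exfalso; apply: (@Dom_nbd z0) => //; exists i0.
  split; first exact: welded_nX.
  move=> j cj; have <- := Om_closure _ _ _ Oz0 cj; exact: connect0.
have E : CC (wpi (z0, s0)) `&` OC C = CC (wpi (z0, s0)).
  apply: (@component_connected _ WS (wpi (z0, s0))).
- exists (wpi (z0, s0)); split => //; exact: connected_component_refl.
- by exists (OC C) => //; exact: OC_open.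
- exists (~` OC (~` C)); first exact/open_closedC/OC_open.
  apply/seteqP; split => q [Kq H]; split => //.
    have Wq := connected_component_sub Kq.
    exact: (OC_dich (i0, s0) _ Wq).1 H.
  have Wq := connected_component_sub Kq.
  exact: (OC_dich (i0, s0) _ Wq).2 H.
by move=> q Kq; rewrite -E in Kq; case: Kq.
Qed.

Definition phi (K : set (welded_space Om X S)) : set ('I_k * bool) :=
  [set v | exists z, Om v.1 z /\ K (wpi (z, v.2))].

Lemma phi_comp i s z : Om i z -> phi (CC (wpi (z, s))) = graph_component Om X S (i, s).
Proof.
move=> Oz; apply/seteqP; split => [[j t] [z' [Oz' Kz']]|[j t] Cv].
  have := (K_OC _ _ _ Oz _ Kz' (z', t) erefl).2 j (subset_closure Oz').
  by [].
have [z' Oz'] := Om_ne j.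
exists z'; split => //.
exact: (conn_comp (i, s) (j, t) Cv z z' Oz Oz').
Qed.

Lemma rep q : WS q -> exists i s z, Om i z /\ CC q = CC (wpi (z, s)).
Proof.
move=> /WS_elim [y [s [wy ->]]].
case: wy => [[i _ Oy]|by0].
  by exists i, s, y.
have [i ci] : exists i, closure (Om i) y by apply: closure_Dom; case: by0 => /bd_closure.
have [z Oz] := Om_ne i.
exists i, s, z; split => //.
apply: same_connected_component.
by apply: (piece_comp i); [right|left].
Qed.

Lemma main_bij : set_bij (welded_components Om X S) (graph_components Om X S) phi.
Proof.
split.
- move=> K [q Wq <-].
  have [i [s [z [Oz ->]]]] := rep _ Wq.
  by rewrite (phi_comp i s z Oz); exists (i, s).
- move=> K1 K2; rewrite !inE => -[q1 W1 <-] [q2 W2 <-].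
  have [i1 [s1 [z1 [Oz1 ->]]]] := rep _ W1.
  have [i2 [s2 [z2 [Oz2 ->]]]] := rep _ W2.
  rewrite (phi_comp i1 s1 z1 Oz1) (phi_comp i2 s2 z2 Oz2) => geq.
  have c12 : graph_component Om X S (i1, s1) (i2, s2).
    by rewrite geq; exact: connect0.
  apply: same_connected_component.
  exact: (conn_comp (i1, s1) (i2, s2) c12 z1 z2 Oz1 Oz2).
- move=> G [[i s] _ <-].
  have [z Oz] := Om_ne i.
  exists (CC (wpi (z, s))); last exact: phi_comp.
  exists (wpi (z, s)) => //.
  by exists (z, s) => //; split => //; left; exists i.
Qed.
End Main.

Theorem lemma4p12 (R : realType) (k : nat) (Om : 'I_k -> set (Chat R))
    (X : set (Chat R)) (S : Chat R -> Chat R) :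
  weak_B_involution Om X S ->
  exists phi : set (welded_space Om X S) -> set ('I_k * bool),
    set_bij (welded_components Om X S) (graph_components Om X S) phi /\
    forall (i : 'I_k) (s : bool) (z : Chat R), Om i z ->
      phi (connected_component (welded_set Om X S) (weld_pi Om X S (z, s)))
        = graph_component Om X S (i, s).
Proof.
move=> HB; exists (@phi R k Om X S); split; first exact: (@main_bij R k Om X S HB).
by move=> i s z Oz; exact: (@phi_comp R k Om X S HB).
Qed.
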